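(* Let $(\mathsf{X},\mu)$, $(\mathsf{Y},\nu)$ be Polish probability spaces and $c:\mathsf{X}\times\mathsf{Y}\to[0,\infty)$ measurable, and for each $\varepsilon>0$ let $\pi_\varepsilon$ be the $(c,\varepsilon)$-cyclically invariant coupling (assumed to exist for every $\varepsilon>0$). Let $k\ge2$ and $0\le\delta\le\delta'\le\infty$. Define $$A_k(\delta,\delta'):=\Big\{(x_i,y_i)_{i=1}^k\in(\mathsf{X}\times\mathsf{Y})^k:\ \delta\le\sum_{i=1}^k c(x_i,y_i)-\sum_{i=1}^k c(x_i,y_{i+1})\le\delta'\Big\},$$ with $y_{k+1}:=y_1$, and let $A\subset A_k(\delta,\delta')$ be Borel. Then $\pi_\varepsilon^k:=\prod_{i=1}^k\pi_\varepsilon(dx_i,dy_i)$ (the $k$-fold product measure on $(\mathsf{X}\times\mathsf{Y})^k$) satisfies $$\pi_\varepsilon^k(A)\le e^{-\delta/\varepsilon}\quad\text{for all }\varepsilon>0.$$ Suppose in addition that $\bar A:=\{(x_i,y_{i+1})_{i=1}^k:\ (x_i,y_i)_{i=1}^k\in A\}$ satisfies $\liminf_{\varepsilon\to0}\varepsilon\log\pi_\varepsilon^k(\bar A)=0$. Then $$\liminf_{\varepsilon\to0}\varepsilon\log\pi_\varepsilon^k(A)\ge-\delta'.$$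
   Context: $\Pi(\mu,\nu)$ is the set of couplings of $\mu,\nu$ and $P:=\mu\otimes\nu$. A coupling $\pi\in\Pi(\mu,\nu)$ is $(c,\varepsilon)$-cyclically invariant if $\pi\sim P$ and its density admits a version $\frac{d\pi}{dP}:\mathsf{X}\times\mathsf{Y}\to(0,\infty)$ such that $\prod_{i=1}^k\frac{d\pi}{dP}(x_i,y_i)=\exp\big(-\frac1\varepsilon[\sum_{i=1}^k c(x_i,y_i)-\sum_{i=1}^k c(x_i,y_{i+1})]\big)\prod_{i=1}^k\frac{d\pi}{dP}(x_i,y_{i+1})$ for all $k\in\mathbb{N}$ and $(x_i,y_i)_{i=1}^k\subset\mathsf{X}\times\mathsf{Y}$, with $y_{k+1}:=y_1$. There is at most one such coupling for each $\varepsilon$. *)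

(* Defs.v *)
From HB Require Import structures.
From mathcomp Require Import all_boot all_order all_algebra.
From mathcomp Require Import all_classical all_reals all_analysis.

Set Implicit Arguments.
Unset Strict Implicit.
Unset Printing Implicit Defensive.

Import Order.TTheory GRing.Theory Num.Theory.
Import numFieldNormedType.Exports.

Local Open Scope classical_set_scope.
Local Open Scope ring_scope.

Definition polish_space (R : realType) (T : topologicalType) : Prop :=
  (exists D : set T, countable D /\ closure D = setT) /\
  (exists dist : T -> T -> R,
     [/\ (forall x y, 0 <= dist x y) /\
         (forall x y, dist x y = 0 <-> x = y),
         (forall x y, dist x y = dist y x),
         (forall x y z, dist x z <= dist x y + dist y z),
         (forall U : set T, open U <->
            (forall x, U x -> exists2 e : R, 0 < e & [set y | dist x y < e] `<=` U)) &
         (forall u : nat -> T,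
            (forall e : R, 0 < e -> exists N, forall m n, (N <= m)%N -> (N <= n)%N ->
                 dist (u m) (u n) < e) ->
            exists l : T, (fun n => dist (u n) l) @ \oo --> (0 : R))]).

Notation borel_type T := (g_sigma_algebraType (@open T)).

(* k-fold product measure of a measure on Z, on k.-tuple Z, built as  *)
(* an iterated integral (as the library builds the binary product     *)
(* measure m1 \x m2 := fun A => \int[m1]_x m2 (xsection A x)).        *)
Fixpoint prod_k (d : measure_display) (Z : measurableType d) (R : realType)
    (m : set Z -> \bar R) (n : nat) : set (n.-tuple Z) -> \bar R :=
  match n return set (n.-tuple Z) -> \bar R with
  | 0 => fun A => (\1_A [tuple] : R)%:E
  | n'.+1 => fun A =>
      (\int[m]_z prod_k m (fun t : n'.-tuple Z => A (cons_tuple z t)))%E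
  end.

Section Coupling.
Context (R : realType) (dX dY : measure_display)
        (X : measurableType dX) (Y : measurableType dY).

Definition is_coupling (mu : probability X R) (nu : probability Y R)
    (pi : probability (X * Y)%type R) : Prop :=
  (forall A : set X, measurable A -> pi (A `*` setT) = mu A) /\
  (forall B : set Y, measurable B -> pi (setT `*` B) = nu B).

Definition cyc_gap (c : X * Y -> R) (k : nat) (t : k.-tuple (X * Y)) : R :=
  \sum_(i < k) c (tnth t i) - \sum_(i < k) c ((tnth t i).1, (tnth t (ordS i)).2).

Definition cyc_shift (k : nat) (t : k.-tuple (X * Y)) : k.-tuple (X * Y) :=
  [tuple ((tnth t i).1, (tnth t (ordS i)).2) | i < k].

Definition cyc_invariant (mu : probability X R) (nu : probability Y R)
    (c : X * Y -> R) (eps : R) (pi : probability (X * Y)%type R) : Prop :=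
  is_coupling mu nu pi /\
  exists f : X * Y -> R,
    [/\ measurable_fun setT f,
        (forall z, 0 < f z),
        (forall B : set (X * Y), measurable B ->
           pi B = (\int[(mu \x nu)%E]_(z in B) (f z)%:E)%E) &
        (forall (k : nat) (t : k.-tuple (X * Y)),
           \prod_(i < k) f (tnth t i) =
           expR (- (cyc_gap c t / eps)) *
           \prod_(i < k) f ((tnth t i).1, (tnth t (ordS i)).2))].

End Coupling.

Arguments cyc_shift {dX dY X Y k}.

(* Main.v *)
Require Import Defs.
From HB Require Import structures.
From mathcomp Require Import all_boot all_order all_algebra.
From mathcomp Require Import all_classical all_reals all_analysis.
From mathcomp Require Import measurable_realfun.
Import Order.TTheory GRing.Theory Num.Theory.
Import numFieldNormedType.Exports.
Local Open Scope classical_set_scope.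
Local Open Scope ring_scope.
Section Iter.
Context {R : realType} {d : measure_display} {Z : measurableType d}.
Local Open Scope ereal_scope.

Fixpoint Ik (m : set Z -> \bar R) (n : nat) : (n.-tuple Z -> \bar R) -> \bar R :=
  match n return (n.-tuple Z -> \bar R) -> \bar R with
  | 0 => fun h => h [tuple]
  | n'.+1 => fun h => \int[m]_z Ik m n' (fun t : n'.-tuple Z => h (cons_tuple z t))
  end.

Lemma Ik_ge0 (m : {measure set Z -> \bar R}) n h :
  (forall t, 0 <= h t) -> 0 <= Ik m n h.
Proof.
elim: n h => [|n IH] h h0 /=; first exact: h0.
by apply: integral_ge0 => z _; apply: IH => t; exact: h0.
Qed.

Lemma measurable_cons_l n dT (T : measurableType dT) (h : (T * n.+1.-tuple Z)%type -> \bar R) :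
  measurable_fun setT h ->
  measurable_fun setT (fun q : (T * Z)%type * n.-tuple Z => h (q.1.1, cons_tuple q.1.2 q.2)).
Proof.
move=> mh; apply: (measurableT_comp mh); apply: measurable_fun_pair.
  exact: (measurableT_comp measurable_fst measurable_fst).
apply: (@measurable_cons _ _ _ _ (fun q : (T * Z)%type * n.-tuple Z => q.1.2) n (fun q => q.2)).
  exact: (measurableT_comp measurable_snd measurable_fst).
exact: measurable_snd.
Qed.

Lemma Ik_measurable (m : {sigma_finite_measure set Z -> \bar R}) n :
  forall dT (T : measurableType dT) (G : (T * n.-tuple Z)%type -> \bar R),
  measurable_fun setT G -> (forall p, 0 <= G p) ->
  measurable_fun setT (fun p : T => Ik m n (fun t => G (p, t))).
Proof.
elim: n => [|n IH] dT T G mG G0 /=.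
  apply: (measurableT_comp mG); apply: measurable_fun_pair => //.
have := IH _ _ _ (measurable_cons_l _ _ _ _ mG) (fun _ => G0 _).
move=> H.
exact: (@measurable_fun_fubini_tonelli_F _ _ _ _ _ m
  (fun q : (T * Z)%type => Ik m n (fun t => G (q.1, cons_tuple q.2 t))) H
  (fun q => Ik_ge0 _ _ _ (fun _ => G0 _))).
Qed.


Lemma mcons_fix n (z : Z) (h : n.+1.-tuple Z -> \bar R) :
  measurable_fun setT h -> measurable_fun setT (fun t : n.-tuple Z => h (cons_tuple z t)).
Proof.
move=> mh; apply: (measurableT_comp mh).
exact: (@measurable_cons _ _ _ _ (fun _ => z) n (fun t => t)).
Qed.

Lemma mcons_pair n (h : n.+1.-tuple Z -> \bar R) :
  measurable_fun setT h ->
  measurable_fun setT (fun p : (Z * n.-tuple Z)%type => h (cons_tuple p.1 p.2)).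
Proof.
move=> mh; apply: (measurableT_comp mh).
exact: (@measurable_cons _ _ _ _ (fun p : (Z * n.-tuple Z)%type => p.1) n (fun p => p.2)
  measurable_fst measurable_snd).
Qed.

Lemma Ik_meas1 (m : {sigma_finite_measure set Z -> \bar R}) n (h : n.+1.-tuple Z -> \bar R) :
  measurable_fun setT h -> (forall t, 0 <= h t) ->
  measurable_fun setT (fun z => Ik m n (fun t => h (cons_tuple z t))).
Proof.
move=> mh h0.
exact: (Ik_measurable m n _ _ (fun p : (Z * n.-tuple Z)%type => h (cons_tuple p.1 p.2))
  (mcons_pair _ _ mh) (fun _ => h0 _)).
Qed.

Lemma Ik_le (m : {sigma_finite_measure set Z -> \bar R}) n (h1 h2 : n.-tuple Z -> \bar R) :
  measurable_fun setT h1 -> measurable_fun setT h2 ->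
  (forall t, 0 <= h1 t) -> (forall t, h1 t <= h2 t) -> Ik m n h1 <= Ik m n h2.
Proof.
elim: n h1 h2 => [|n IH] h1 h2 m1 m2 h10 h12 /=; first exact: h12.
have h20 : forall t, 0 <= h2 t by move=> t; exact: le_trans (h10 t) (h12 t).
apply: ge0_le_integral => //.
- by move=> z _; apply: Ik_ge0 => t; exact: h10.
- exact: Ik_meas1.
- exact: Ik_meas1.
- move=> z _; apply: IH.
  + exact: mcons_fix.
  + exact: mcons_fix.
  + by move=> t; exact: h10.
  + by move=> t; exact: h12.
Qed.

Lemma Ik_scale (m : {sigma_finite_measure set Z -> \bar R}) n (h : n.-tuple Z -> \bar R) (c : R) :
  measurable_fun setT h -> (forall t, 0 <= h t) -> (0 <= c)%R ->
  Ik m n (fun t => c%:E * h t) = c%:E * Ik m n h.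
Proof.
elim: n h => [|n IH] h mh h0 c0 //=.
transitivity (\int[m]_z (c%:E * Ik m n (fun t => h (cons_tuple z t)))).
  apply: eq_integral => z _; apply: IH => //.
  exact: (mcons_fix _ _ _ mh).
apply: (@ge0_integralZl_EFin _ _ _ m setT measurableT
  (fun z => Ik m n (fun t => h (cons_tuple z t)))) => //.
- by move=> z _; apply: Ik_ge0 => t; exact: h0.
- exact: Ik_meas1.
Qed.

Lemma Ik_comm (m : {sigma_finite_measure set Z -> \bar R}) d1 (Y : measurableType d1)
  (m1 : {sigma_finite_measure set Y -> \bar R}) n :
  forall (G : (Y * n.-tuple Z)%type -> \bar R),
  measurable_fun setT G -> (forall p, 0 <= G p) ->
  \int[m1]_y Ik m n (fun t => G (y, t)) = Ik m n (fun t => \int[m1]_y G (y, t)).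
Proof.
elim: n => [|n IH] G mG G0 //=.
have mH : measurable_fun setT
    (fun q : (Y * Z)%type => Ik m n (fun t => G (q.1, cons_tuple q.2 t))).
  exact: (Ik_measurable m n _ _ _ (measurable_cons_l _ _ _ _ mG) (fun _ => G0 _)).
have := @fubini_tonelli _ _ _ _ _ m1 m
  (fun q : (Y * Z)%type => Ik m n (fun t => G (q.1, cons_tuple q.2 t))) mH
  (fun q => Ik_ge0 _ _ _ (fun _ => G0 _)).
move=> /= ->.
apply: eq_integral => z _.
rewrite (IH (fun p : (Y * n.-tuple Z)%type => G (p.1, cons_tuple z p.2))) //.
apply: (measurableT_comp mG); apply: measurable_fun_pair => //.
exact: (@measurable_cons _ _ _ _ (fun _ => z) n (fun p : (Y * n.-tuple Z)%type => p.2)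
  (measurable_cst _) measurable_snd).
Qed.

End Iter.
Section Rot.
Context {R : realType} {d : measure_display} {Y : measurableType d}.
Local Open Scope ereal_scope.

Definition rotT n (t : n.-tuple Y) : n.-tuple Y := [tuple tnth t (ordS i) | i < n].
Arguments rotT {n}.

Lemma measurable_rotT n : measurable_fun setT (@rotT n).
Proof.
apply/measurable_fun_tnthP => i.
have -> : (@tnth n Y ^~ i \o @rotT n) = (fun t => tnth t (ordS i)).
  by apply: funext => t; rewrite /= tnth_mktuple.
exact: measurable_tnth.
Qed.

Lemma rotT0 (t : 0.-tuple Y) : rotT t = t.
Proof. by rewrite (tuple0 t) (tuple0 (rotT _)). Qed.

Lemma rotT1 (y : Y) (t : 0.-tuple Y) : rotT (cons_tuple y t) = cons_tuple y t.
Proof.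
apply: eq_from_tnth => i; rewrite tnth_mktuple; congr tnth.
by apply: val_inj; rewrite /= modn1; case: i => [[]].
Qed.

Lemma rotT_cons2 n (y y2 : Y) (s : n.-tuple Y) :
  rotT (cons_tuple y (cons_tuple y2 s)) = cons_tuple y2 (rotT (cons_tuple y s)).
Proof.
apply: eq_from_tnth => i; rewrite tnth_mktuple.
set t := rotT (cons_tuple y s).
rewrite !(tnth_nth y) /=.
case: i => [[|j] Hj] //=.
have Hj' : (j < n.+1)%N by [].
rewrite -[nth y t j](tnth_nth y _ (Ordinal Hj')) /t tnth_mktuple (tnth_nth y) /=.
have [jn|jn] := ltnP j n.
  by rewrite !modn_small.
have -> : j = n by apply/eqP; rewrite eqn_leq jn -ltnS Hj'.
by rewrite !modnn.
Qed.

Variable nu : {sigma_finite_measure set Y -> \bar R}.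

Lemma Ik_rot_aux n : forall (g : n.+1.-tuple Y -> \bar R),
  measurable_fun setT g -> (forall t, 0 <= g t) ->
  Ik nu n (fun s => \int[nu]_y g (rotT (cons_tuple y s))) =
  \int[nu]_y Ik nu n (fun s => g (cons_tuple y s)).
Proof.
elim: n => [|n IH] g mg g0 /=.
  by apply: eq_integral => y _; rewrite rotT1.
apply: eq_integral => y2 _.
under eq_fun do under eq_integral do rewrite rotT_cons2.
rewrite (IH (fun u => g (cons_tuple y2 u))) //.
exact: mcons_fix.
Qed.

Lemma Ik_rot n (g : n.-tuple Y -> \bar R) :
  measurable_fun setT g -> (forall t, 0 <= g t) ->
  Ik nu n (fun t => g (rotT t)) = Ik nu n g.
Proof.
case: n g => [|n] g mg g0 /=; first by rewrite rotT0.
rewrite (Ik_comm nu _ _ nu n (fun p : (Y * n.-tuple Y)%type => g (rotT (cons_tuple p.1 p.2)))) //.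
- exact: Ik_rot_aux.
- apply: (measurableT_comp mg); apply: (measurableT_comp (measurable_rotT _)).
  exact: (@measurable_cons _ _ _ _ (fun p : (Y * n.-tuple Y)%type => p.1) n (fun p => p.2)
    measurable_fst measurable_snd).
Qed.

End Rot.
Arguments rotT {d Y n}.
Section Zip.
Context {R : realType} {dX dY : measure_display} {X : measurableType dX} {Y : measurableType dY}.
Local Open Scope ereal_scope.

Definition zipT n (xs : n.-tuple X) (ys : n.-tuple Y) : n.-tuple (X * Y)%type :=
  [tuple (tnth xs i, tnth ys i) | i < n].
Arguments zipT {n}.

Lemma zipT_cons n x y (xs : n.-tuple X) (ys : n.-tuple Y) :
  zipT (cons_tuple x xs) (cons_tuple y ys) = cons_tuple (x, y) (zipT xs ys).
Proof.
apply: eq_from_tnth => i; rewrite tnth_mktuple.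
set t := zipT xs ys.
rewrite (tnth_nth x (cons_tuple x xs)) (tnth_nth y (cons_tuple y ys)) (tnth_nth (x, y)) /=.
case: i => [[|j] Hj] //=.
have Hj' : (j < n)%N by [].
by rewrite -[nth (x, y) t j](tnth_nth (x, y) _ (Ordinal Hj')) /t tnth_mktuple
  (tnth_nth x) (tnth_nth y).
Qed.

Lemma measurable_zipT n :
  measurable_fun setT (fun p : (n.-tuple X * n.-tuple Y)%type => zipT p.1 p.2).
Proof.
apply/measurable_fun_tnthP => i.
have -> : (@tnth n (X * Y)%type ^~ i \o (fun p : (n.-tuple X * n.-tuple Y)%type => zipT p.1 p.2))
   = (fun p => (tnth p.1 i, tnth p.2 i)).
  by apply: funext => p; rewrite /= tnth_mktuple.
apply: measurable_fun_pair.
  exact: (measurableT_comp (measurable_tnth i) measurable_fst).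
exact: (measurableT_comp (measurable_tnth i) measurable_snd).
Qed.

Lemma cyc_shift_zipT n (xs : n.-tuple X) (ys : n.-tuple Y) :
  cyc_shift (zipT xs ys) = zipT xs (rotT ys).
Proof.
by apply: eq_from_tnth => i; rewrite !tnth_mktuple.
Qed.

Lemma measurable_cyc_shift n : measurable_fun setT (@cyc_shift dX dY X Y n).
Proof.
apply/measurable_fun_tnthP => i.
have -> : (@tnth n (X * Y)%type ^~ i \o @cyc_shift dX dY X Y n)
   = (fun t => ((tnth t i).1, (tnth t (ordS i)).2)).
  by apply: funext => p; rewrite /= tnth_mktuple.
apply: measurable_fun_pair.
  exact: (measurableT_comp measurable_fst (measurable_tnth i)).
exact: (measurableT_comp measurable_snd (measurable_tnth _)).
Qed.

Variables (mu : probability X R) (nu : probability Y R).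

Definition Pm : probability (X * Y)%type R := (mu \x nu)%E.

Lemma Ik_J n (h : n.-tuple (X * Y)%type -> \bar R) :
  measurable_fun setT h -> (forall t, 0 <= h t) ->
  Ik Pm n h = Ik mu n (fun xs => Ik nu n (fun ys => h (zipT xs ys))).
Proof.
elim: n h => [|n IH] h mh h0 /=.
  by rewrite (tuple0 (zipT _ _)).
rewrite /Pm (@fubini_tonelli1 _ _ _ _ _ mu nu
  (fun z => Ik Pm n (fun t => h (cons_tuple z t)))); last 2 first.
- exact: (Ik_meas1 Pm n h mh h0).
- by move=> z; apply: Ik_ge0 => t; exact: h0.
apply: eq_integral => x _.
rewrite /fubini_F.
transitivity (\int[nu]_y Ik mu n (fun xs => Ik nu n (fun ys => h (cons_tuple (x, y) (zipT xs ys))))).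
  apply: eq_integral => y _; rewrite IH //.
  exact: mcons_fix.
transitivity (Ik mu n (fun t => \int[nu]_z
    Ik nu n (fun ys => h (cons_tuple (x, z) (zipT t ys))))); first last.
  congr (Ik _ _ _); apply: funext => xs /=.
  apply: eq_integral => y _; congr (Ik _ _ _); apply: funext => ys.
  by rewrite zipT_cons.
apply: (Ik_comm mu _ _ nu n (fun p : (Y * n.-tuple X)%type =>
   Ik nu n (fun ys => h (cons_tuple (x, p.1) (zipT p.2 ys))))).
- apply: (Ik_measurable nu n _ _ (fun q : ((Y * n.-tuple X) * n.-tuple Y)%type =>
     h (cons_tuple (x, q.1.1) (zipT q.1.2 q.2)))); last first.
    by move=> q; exact: h0.
  apply: (measurableT_comp mh).
  apply: (@measurable_cons _ _ _ _ (fun q : ((Y * n.-tuple X) * n.-tuple Y)%type => (x, q.1.1)) n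
     (fun q => zipT q.1.2 q.2)).
    apply: measurable_fun_pair => //.
    exact: (measurableT_comp measurable_fst measurable_fst).
  exact: (measurableT_comp (measurable_zipT n)
    (measurable_fun_pair (measurableT_comp measurable_snd measurable_fst) measurable_snd)).
- by move=> p; apply: Ik_ge0 => t; exact: h0.
Qed.

Lemma Ik_shift n (h : n.-tuple (X * Y)%type -> \bar R) :
  measurable_fun setT h -> (forall t, 0 <= h t) ->
  Ik Pm n (fun t => h (cyc_shift t)) = Ik Pm n h.
Proof.
move=> mh h0.
rewrite Ik_J //; last first.
  exact: (measurableT_comp mh (measurable_cyc_shift n)).
rewrite Ik_J //.
congr (Ik _ _ _); apply: funext => xs.
under eq_fun do rewrite cyc_shift_zipT.
rewrite (Ik_rot nu n (fun ys => h (zipT xs ys))) //.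
have mz : measurable_fun setT (fun ys : n.-tuple Y => zipT xs ys).
  have := measurableT_comp (measurable_zipT n)
    (measurable_fun_pair (measurable_cst xs) (@measurable_id _ (n.-tuple Y) setT)).
  by [].
exact: (measurableT_comp mh mz).
Qed.

End Zip.
Section Density.
Context {R : realType} {d : measure_display} {Z : measurableType d}.
Local Open Scope ereal_scope.
Variables (P : {sigma_finite_measure set Z -> \bar R}) (pi : {sigma_finite_measure set Z -> \bar R}).
Variables (f : Z -> R) (mf : measurable_fun setT f) (f0 : forall z, (0 <= f z)%R).
Hypothesis hpi : forall B, measurable B -> pi B = \int[P]_(z in B) (f z)%:E.

Import HBNNSimple.

Lemma dens_int (g : Z -> \bar R) : (forall x, 0 <= g x) -> measurable_fun setT g ->
  \int[pi]_x g x = \int[P]_x (g x * (f x)%:E).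
Proof.
move=> g0 mg.
have mE : measurable (setT : set Z) by [].
pose h := nnsfun_approx mE mg.
have -> : \int[pi]_x g x =
    lim (\int[pi]_x (EFin \o h n) x @[n --> \oo]).
  have fE x : g x = lim ((EFin \o h n) x @[n --> \oo]).
    by apply/esym/cvg_lim => //; exact: cvg_nnsfun_approx.
  under eq_integral => x _ do rewrite fE.
  apply: monotone_convergence => //.
  - move=> n; apply/measurable_EFinP.
    by apply: (measurable_funS measurableT) => //; exact/measurable_funP.
  - by move=> n x _ //=; rewrite lee_fin.
  - by move=> x _ a b ab; rewrite lee_fin; exact/lefP/nd_nnsfun_approx.
have -> : \int[P]_x (g x * (f x)%:E) =
    lim (\int[P]_x ((EFin \o h n) x * (f x)%:E) @[n --> \oo]).
  have fg x : g x * (f x)%:E = lim (((EFin \o h n) x * (f x)%:E) @[n --> \oo]).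
    by apply/esym/cvg_lim => //; apply: cvgeZr; [by []|exact: cvg_nnsfun_approx].
  under eq_integral => x _ do rewrite fg.
  apply: monotone_convergence => [//| | |].
  - move=> n; apply/emeasurable_funM; first exact/measurable_EFinP.
    exact/measurable_EFinP.
  - by move=> n x _ /=; rewrite mule_ge0 ?lee_fin.
  - by move=> x _ a b ab/=; rewrite lee_wpmul2r ?lee_fin//; exact/lefP/nd_nnsfun_approx.
suff suf n : \int[P]_x ((EFin \o h n) x * (f x)%:E) =
    \int[pi]_x (EFin \o h n) x.
  have E : (fun n => \int[P]_x ((EFin \o h n) x * (f x)%:E)) =
           (fun n => \int[pi]_x (EFin \o h n) x) by apply: funext => n; exact: suf.
  by rewrite E.
transitivity (\int[pi]_x
   (\sum_(y \in range (h n)) (y * \1_(h n @^-1` [set y]) x)%:E)); last first.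
  by apply: eq_integral => t tE; rewrite /= fimfunE -fsumEFin.
have indich m r : measurable_fun setT (fun x => (r * \1_(h m @^-1` [set r]) x)%:E).
  by apply: (measurable_comp measurableT) => //; exact: measurable_funM.
rewrite ge0_integral_fsum//; last by move=> m y Ey; exact: nnfun_muleindic_ge0.
transitivity (\int[P]_x (\sum_(y \in range (h n))
    (y * \1_(h n @^-1` [set y]) x)%:E * (f x)%:E)).
  under [RHS]eq_integral => x xE.
    rewrite -ge0_mule_fsuml => [|y]; last exact: nnfun_muleindic_ge0.
    rewrite fsumEFin // -(fimfunE _ x); over.
  by [].
rewrite ge0_integral_fsum//; last 2 first.
  - move=> y; apply: emeasurable_funM => //.
    exact/measurable_EFinP.
  - move=> m y Ey; apply: mule_ge0; last by rewrite lee_fin.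
    by rewrite EFinM; exact: nnfun_muleindic_ge0.
apply: eq_fsbigr => r rhn.
under [RHS]eq_integral do rewrite EFinM.
rewrite integralZl_indic_nnsfun => //.
under eq_integral do rewrite EFinM -muleA.
rewrite ge0_integralZl//.
- under eq_integral do rewrite muleC.
  rewrite (eq_integral ((EFin \o f) \_ (h n @^-1` [set r]))); last first.
    by move=> x xE; rewrite epatch_indic.
  by rewrite -integral_mkcondr setTI -hpi // integral_indic // setIT.
- apply: emeasurable_funM; apply/measurable_EFinP => //.
- by move=> t Et; rewrite mule_ge0 ?lee_fin.
- by move: rhn; rewrite inE => -[t _ <-]; rewrite lee_fin.
Qed.


Definition Fk n (t : n.-tuple Z) : R := (\prod_(i < n) f (tnth t i))%R.
Arguments Fk {n}.

Lemma Fk_cons n z (t : n.-tuple Z) : Fk (cons_tuple z t) = (f z * Fk t)%R.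
Proof.
rewrite /Fk big_ord_recl; congr (_ * _)%R.
by apply: eq_bigr => i _; rewrite (tnth_nth z) /= -(tnth_nth z).
Qed.

Lemma Fk0 (t : 0.-tuple Z) : Fk t = 1%R.
Proof. by rewrite /Fk big_ord0. Qed.

Lemma Fk_ge0 n (t : n.-tuple Z) : (0 <= Fk t)%R.
Proof. by apply: prodr_ge0 => i _; exact: f0. Qed.

Lemma measurable_Fk n : measurable_fun setT (fun t : n.-tuple Z => Fk t).
Proof.
rewrite /Fk; elim: (index_enum _) => [|i s IH].
  under eq_fun do rewrite big_nil.
  exact: measurable_cst.
under eq_fun do rewrite big_cons.
apply: measurable_funM => //.
exact: (measurableT_comp mf (measurable_tnth i)).
Qed.

Lemma Ik_dens n (h : n.-tuple Z -> \bar R) :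
  measurable_fun setT h -> (forall t, 0 <= h t) ->
  Ik pi n h = Ik P n (fun t => h t * (Fk t)%:E).
Proof.
elim: n h => [|n IH] h mh h0 /=.
  by rewrite Fk0 mule1.
transitivity (\int[pi]_z Ik P n (fun t => h (cons_tuple z t) * (Fk t)%:E)).
  apply: eq_integral => z _; rewrite IH //.
  exact: mcons_fix.
have mG : measurable_fun setT
    (fun p : (Z * n.-tuple Z)%type => h (cons_tuple p.1 p.2) * (Fk p.2)%:E).
  apply: emeasurable_funM; first exact: mcons_pair.
  apply/measurable_EFinP.
  exact: (measurableT_comp (measurable_Fk n) measurable_snd).
have G0 : forall p : (Z * n.-tuple Z)%type, 0 <= h (cons_tuple p.1 p.2) * (Fk p.2)%:E.
  by move=> p; rewrite mule_ge0 // lee_fin Fk_ge0.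
rewrite dens_int; last 2 first.
- by move=> z; apply: Ik_ge0 => t; exact: (G0 (z, t)).
- exact: (Ik_measurable P n _ _ _ mG G0).
apply: eq_integral => z _.
rewrite muleC -(Ik_scale P n _ (f z)) //; last 2 first.
- exact: (measurable_fun_pair2 z mG).
- by move=> t; exact: (G0 (z, t)).
congr (Ik _ _ _); apply: funext => t.
by rewrite Fk_cons EFinM muleCA.
Qed.

End Density.
Arguments Fk {R d Z} f {n}.
Section Prodk.
Context {R : realType} {d : measure_display} {Z : measurableType d}.
Local Open Scope ereal_scope.

Lemma prod_k_Ik (m : {measure set Z -> \bar R}) n (A : set (n.-tuple Z)) :
  prod_k m A = Ik m n (fun t => (\1_A t)%:E).
Proof.
elim: n A => [|n IH] A //=.
by apply: eq_integral => z _; rewrite IH.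
Qed.

Lemma Ik_one (m : probability Z R) n : Ik m n (fun _ => 1) = 1.
Proof.
elim: n => [|n IH] //=.
under eq_integral do rewrite IH.
by rewrite integral_cst // mul1e; exact: probability_setT.
Qed.

Lemma prod_k_le1 (m : probability Z R) n (A : set (n.-tuple Z)) :
  measurable A -> prod_k m A <= 1.
Proof.
move=> mA; rewrite prod_k_Ik -(Ik_one m n).
apply: Ik_le => //.
- by apply/measurable_EFinP; apply: measurable_indic.
- by move=> t; rewrite lee_fin indicE; case: (_ \in _).
Qed.

Lemma prod_k_ge0 (m : probability Z R) n (A : set (n.-tuple Z)) : 0 <= prod_k m A.
Proof. by rewrite prod_k_Ik; apply: Ik_ge0 => t; rewrite lee_fin indicE. Qed.

End Prodk.

Section Main.
Context {R : realType} {dX dY : measure_display} {X : measurableType dX} {Y : measurableType dY}.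
Local Open Scope ereal_scope.
Variables (mu : probability X R) (nu : probability Y R) (c : (X * Y)%type -> R).
Variables (eps : R) (pie : probability (X * Y)%type R).
Hypothesis eps0 : (0 < eps)%R.
Hypothesis hcyc : cyc_invariant mu nu c eps pie.

Definition ishift n (t : n.-tuple (X * Y)%type) : n.-tuple (X * Y)%type :=
  [tuple ((tnth t i).1, (tnth t (ord_pred i)).2) | i < n].

Lemma ishiftK n (t : n.-tuple (X * Y)%type) : ishift n (cyc_shift t) = t.
Proof.
apply: eq_from_tnth => i; rewrite !tnth_mktuple ord_predK.
by case: (tnth t i).
Qed.

Lemma shiftK n (t : n.-tuple (X * Y)%type) : cyc_shift (ishift n t) = t.
Proof.
apply: eq_from_tnth => i; rewrite !tnth_mktuple ordSK.
by case: (tnth t i).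
Qed.

Lemma measurable_ishift n : measurable_fun setT (ishift n).
Proof.
apply/measurable_fun_tnthP => i.
have -> : (@tnth n (X * Y)%type ^~ i \o ishift n)
   = (fun t => ((tnth t i).1, (tnth t (ord_pred i)).2)).
  by apply: funext => p; rewrite /= tnth_mktuple.
apply: measurable_fun_pair.
  exact: (measurableT_comp measurable_fst (measurable_tnth i)).
exact: (measurableT_comp measurable_snd (measurable_tnth _)).
Qed.

Lemma shift_image n (A : set (n.-tuple (X * Y)%type)) :
  cyc_shift @` A = ishift n @^-1` A.
Proof.
apply/seteqP; split => t.
  by case=> s As <-; rewrite /preimage /= ishiftK.
by move=> At; exists (ishift n t) => //; rewrite shiftK.
Qed.

Lemma measurable_shift_image n (A : set (n.-tuple (X * Y)%type)) :
  measurable A -> measurable (cyc_shift @` A).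
Proof.
move=> mA; rewrite shift_image.
have := measurable_ishift n measurableT A mA.
by rewrite setTI.
Qed.

Lemma Fk_shift n f (t : n.-tuple (X * Y)%type) :
  (forall (k : nat) (t : k.-tuple (X * Y)%type),
     \prod_(i < k) f (tnth t i) =
     expR (- (cyc_gap c t / eps)) *
     \prod_(i < k) f ((tnth t i).1, (tnth t (ordS i)).2))%R ->
  Fk f t = (expR (- (cyc_gap c t / eps)) * Fk f (cyc_shift t))%R.
Proof.
move=> hk; rewrite /Fk hk; congr (_ * _)%R.
by apply: eq_bigr => i _; rewrite tnth_mktuple.
Qed.

Lemma part1_gen n (A : set (n.-tuple (X * Y)%type)) (b : R) :
  measurable A -> (0 <= b)%R ->
  (forall t, A t -> (expR (- (cyc_gap c t / eps)) <= b)%R) ->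
  prod_k pie A <= b%:E.
Proof.
move=> mA b0 hb.
case: hcyc => _ [f [mf fpos hdens hk]].
have f0 : forall z, (0 <= f z)%R by move=> z; exact: ltW.
have hd : forall B, measurable B -> pie B = \int[Pm mu nu]_(z in B) (f z)%:E.
  by move=> B mB; rewrite hdens.
have mFs : measurable_fun setT (fun t : n.-tuple (X * Y)%type => (Fk f (cyc_shift t))%:E).
  apply/measurable_EFinP.
  exact: (measurableT_comp (measurable_Fk f mf n) (measurable_cyc_shift n)).
have mF : measurable_fun setT (fun t : n.-tuple (X * Y)%type => (Fk f t)%:E).
  by apply/measurable_EFinP; exact: (measurable_Fk f mf n).
rewrite prod_k_Ik (Ik_dens (Pm mu nu) pie f mf f0 hd n); last 2 first.
- by apply/measurable_EFinP; apply: measurable_indic.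
- by move=> t; rewrite lee_fin indicE.
apply: le_trans (Ik_le (Pm mu nu) n _ (fun t => b%:E * (Fk f (cyc_shift t))%:E) _ _ _ _) _.
- apply: emeasurable_funM => //.
  by apply/measurable_EFinP; apply: measurable_indic.
- exact: emeasurable_funM.
- by move=> t; rewrite mule_ge0 // lee_fin ?indicE ?Fk_ge0.
- move=> t; rewrite indicE; have [tA|tA] := boolP (t \in A).
    rewrite mul1e -EFinM lee_fin (Fk_shift _ _ t hk) ler_wpM2r //; first exact: Fk_ge0.
    by apply: hb; rewrite -in_setE.
  by rewrite mul0e mule_ge0 // lee_fin Fk_ge0.
rewrite Ik_scale //; last by move=> t; rewrite lee_fin Fk_ge0.
rewrite (Ik_shift mu nu n (fun t => (Fk f t)%:E)) //; last by move=> t; rewrite lee_fin Fk_ge0.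
have := Ik_dens (Pm mu nu) pie f mf f0 hd n (fun _ => 1) (measurable_cst _) (fun _ => lee01).
rewrite Ik_one.
under eq_fun do rewrite mul1e.
by move=> <-; rewrite mule1.
Qed.

Lemma part2_gen n (A : set (n.-tuple (X * Y)%type)) (b : R) :
  measurable A -> (0 <= b)%R ->
  (forall t, A t -> (b <= expR (- (cyc_gap c t / eps)))%R) ->
  b%:E * prod_k pie (cyc_shift @` A) <= prod_k pie A.
Proof.
move=> mA b0 hb.
case: hcyc => _ [f [mf fpos hdens hk]].
have f0 : forall z, (0 <= f z)%R by move=> z; exact: ltW.
have hd : forall B, measurable B -> pie B = \int[Pm mu nu]_(z in B) (f z)%:E.
  by move=> B mB; rewrite hdens.
have mFs : measurable_fun setT (fun t : n.-tuple (X * Y)%type => (Fk f (cyc_shift t))%:E).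
  apply/measurable_EFinP.
  exact: (measurableT_comp (measurable_Fk f mf n) (measurable_cyc_shift n)).
have mF : measurable_fun setT (fun t : n.-tuple (X * Y)%type => (Fk f t)%:E).
  by apply/measurable_EFinP; exact: (measurable_Fk f mf n).
have mAb := measurable_shift_image n A mA.
have mIA : measurable_fun setT (fun t : n.-tuple (X * Y)%type => (\1_A t : R)%:E).
  by apply/measurable_EFinP; apply: measurable_indic.
have mIAb : measurable_fun setT (fun t : n.-tuple (X * Y)%type => (\1_(cyc_shift @` A) t : R)%:E).
  by apply/measurable_EFinP; apply: measurable_indic.
rewrite !prod_k_Ik (Ik_dens (Pm mu nu) pie f mf f0 hd n) //.
rewrite (Ik_dens (Pm mu nu) pie f mf f0 hd n) //.
rewrite -(Ik_shift mu nu n (fun t => (\1_(cyc_shift @` A) t)%:E * (Fk f t)%:E)); last 2 first.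
- exact: emeasurable_funM.
- by move=> t; rewrite mule_ge0 // lee_fin ?indicE ?Fk_ge0.
have e1 : forall t, (\1_(cyc_shift @` A) (cyc_shift t) : R)%:E = (\1_A t : R)%:E.
  move=> t; rewrite !indicE; congr ((_ : bool)%:R%:E).
  by apply/idP/idP; rewrite !in_setE shift_image /preimage /= ishiftK.
under eq_fun do rewrite e1.
rewrite -Ik_scale //; last 2 first.
- exact: emeasurable_funM.
- by move=> t; rewrite mule_ge0 // lee_fin ?indicE ?Fk_ge0.
apply: Ik_le => //.
- apply: emeasurable_funM; first exact: measurable_cst.
  exact: emeasurable_funM.
- exact: emeasurable_funM.
- by move=> t; rewrite !mule_ge0 // lee_fin ?indicE ?Fk_ge0.
- move=> t; rewrite indicE; have [tA|tA] := boolP (t \in A).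
    rewrite !mul1e -EFinM lee_fin (Fk_shift _ _ t hk) ler_wpM2r //; first exact: Fk_ge0.
    by apply: hb; rewrite -in_setE.
  by rewrite !mul0e mule0.
Qed.

End Main.
Lemma le_sub_all {R : realType} (a : R) (S : \bar R) :
  (forall e : R, (0 < e)%R -> ((a - e)%:E <= S)%E) -> (a%:E <= S)%E.
Proof.
case: S => [s| |] H.
- rewrite lee_fin; apply/ler_addgt0Pr => e e0.
  have := H e e0; rewrite lee_fin => h.
  by rewrite -lerBlDr.
- exact: leey.
- by have := H 1%R ltr01.
Qed.

Theorem lemma3p1 (R : realType) (TX TY : ptopologicalType)
  (polX : polish_space R TX) (polY : polish_space R TY)
  (mu : probability (borel_type TX) R) (nu : probability (borel_type TY) R)
  (c : borel_type TX * borel_type TY -> R)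
  (mc : measurable_fun setT c) (c_ge0 : forall z, 0 <= c z)
  (pi : R -> probability (borel_type TX * borel_type TY)%type R)
  (hpi : forall eps : R, 0 < eps -> cyc_invariant mu nu c eps (pi eps))
  (k : nat) (hk : (2 <= k)%N)
  (delta delta' : \bar R)
  (hd0 : (0 <= delta)%E) (hdd : (delta <= delta')%E)
  (A : set (k.-tuple (borel_type TX * borel_type TY)))
  (mA : measurable A)
  (hA : forall t, A t -> (delta <= (cyc_gap c t)%:E <= delta')%E) :
  (forall eps : R, 0 < eps ->
     (prod_k (pi eps) A <= expeR (- (delta * (eps^-1)%:E)))%E) /\
  (limf_einf (fun eps : R => (eps%:E * lne (prod_k (pi eps) (cyc_shift @` A)))%E)
       (0^'+) = 0%E ->
   (limf_einf (fun eps : R => (eps%:E * lne (prod_k (pi eps) A))%E) (0^'+)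
      >= - delta')%E).
Proof.
split.
  move=> eps e0.
  have hc := hpi eps e0.
  case: delta hd0 hdd hA => [r| |] hd0 hdd hA.
  - apply: le_trans (part1_gen mu nu c eps (pi eps) hc k A (expR (- (r / eps))) mA
      (expR_ge0 _) _) _.
      move=> t At; rewrite ler_expR lerN2.
      have /andP[h1 _] := hA t At.
      by rewrite lee_fin in h1; rewrite ler_pM2r // invr_gt0.
    by rewrite -EFinM -EFinN /= lee_fin.
  - apply: le_trans (part1_gen mu nu c eps (pi eps) hc k A 0 mA (lexx 0) _) _.
      by move=> t At; have /andP[h1 _] := hA t At.
    exact: expeR_ge0.
  - by [].
move=> Hlim.
case: delta' hdd hA => [r'| |] hdd hA; last first.
- by have := le_trans hd0 hdd.
- by rewrite /= leNye.
set gA := (fun eps : R => _).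
set gAb := (fun eps : R => _) in Hlim.
have key : forall eps : R, 0 < eps -> ((- r')%:E + gAb eps <= gA eps)%E.
  move=> eps e0.
  have hc := hpi eps e0.
  have mAb := measurable_shift_image k A mA.
  have H2 := part2_gen mu nu c eps (pi eps) hc k A (expR (- (r' / eps))) mA
    (expR_ge0 _).
  have /H2 {}H2 : forall t, A t -> (expR (- (r' / eps)) <= expR (- (cyc_gap c t / eps)))%R.
    move=> t At; rewrite ler_expR lerN2.
    have /andP[_ h1] := hA t At.
    by rewrite lee_fin in h1; rewrite ler_pM2r // invr_gt0.
  rewrite /gA /gAb.
  move: (prod_k (pi eps) A) (prod_k_ge0 (pi eps) k A) (prod_k_le1 (pi eps) k A mA) H2
    => [a| |] a0 a1 H2 //.
  move: (prod_k (pi eps) (cyc_shift @` A)) (prod_k_ge0 (pi eps) k (cyc_shift @` A))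
    (prod_k_le1 (pi eps) k (cyc_shift @` A) mAb) H2 => [b| |] b0 b1 H2 //.
  rewrite lee_fin in b0; move: b0; rewrite le0r => /orP[/eqP->|bpos].
    by rewrite le0_lneNy // mulrNy gtr0_sg // mul1e addeNy leNye.
  rewrite -EFinM lee_fin in H2.
  have apos : (0 < a)%R.
    by apply: lt_le_trans H2; rewrite mulr_gt0 // expR_gt0.
  rewrite !lne_EFin // -!EFinM -EFinD lee_fin.
  have h : (- (r' / eps) + ln b <= ln a)%R.
    rewrite -[X in (X + _)%R]expRK -lnM ?posrE ?expR_gt0 //.
    by rewrite ler_ln // ?posrE ?mulr_gt0 ?expR_gt0.
  rewrite -(ler_pM2l e0) mulrDr in h.
  by rewrite mulrN mulrCA mulfV ?gt_eqF // mulr1 in h.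
rewrite limf_einfE; rewrite limf_einfE in Hlim.
rewrite -EFinN; apply: le_sub_all => e e0.
have : ((- e)%:E < ereal_sup [set ereal_inf (gAb @` V) | V in 0^'+])%E.
  by rewrite Hlim lte_fin oppr_lt0.
case/ereal_sup_gt => _ [V FV <-] HV.
have Fap : Filter (0:R)^'+ by exact: at_right_proper_filter.
have FW : (0^'+) (V `&` [set x | 0 < x]) := filterI FV (nbhs_right_gt 0).
have HS : [set ereal_inf (gA @` V) | V in 0^'+]
            (ereal_inf (gA @` (V `&` [set x | 0 < x]))).
  by exists (V `&` [set x | 0 < x]) => //; exact: FW.
apply: le_trans (ereal_sup_ubound HS).
apply/ereal_infP => _ [x [Vx x0] <-].
apply: le_trans (key x x0).
rewrite EFinB; apply: leeD2l.
apply: le_trans (ltW HV) _.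
by apply: ereal_inf_lbound; exists x.
Qed.

Print Assumptions lemma3p1.
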